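(* Let $r\in\mathbb R$ and $\lambda\in\mathbb O$ with $r^2+|\lambda|^2=1$. The map $\mathcal R_{r,\lambda}:U_1/_\sim\to U_1/_\sim$, $[1,u,v]\mapsto[1,\ ru+\lambda v,\ \bar\lambda u-rv]$, is an isometry of $U_1/_\sim\subset\mathbb OP^2$ with the metric $g$.
   Context: Octonions: $\mathbb O=\mathbb H\oplus\mathbb H$ with product $(q_1,q_2)(p_1,p_2)=(q_1p_1-\bar p_2q_2,\ p_2q_1+q_2\bar p_1)$, conjugation $\overline{(q_1,q_2)}=(\bar q_1,-q_2)$, $\mathrm{Re}$ the real part, $\langle a,b\rangle=\mathrm{Re}(a\bar b)$, $|a|^2=\langle a,a\rangle$. $\mathbb OP^2=\mathcal U/_\sim$ with $\mathcal U=(\{1\}\times\mathbb O^2)\cup(\mathbb O\times\{1\}\times\mathbb O)\cup(\mathbb O^2\times\{1\})$ and $[a,b,c]\sim[d,e,f]$ iff $(a,b,c)=(d\lambda,e\lambda,f\lambda)$ for some $\lambda\in\mathbb O\setminus\{0\}$; $U_1/_\sim=\{[1,u,v]\}$ is identified with $\mathbb O^2$ via $(u,v)$. The metric $g$ on this chart is the one with quadratic form, for tangent vector $(du,dv)=(\xi,\eta)$, $ds^2=\frac{|\xi|^2(1+|v|^2)+|\eta|^2(1+|u|^2)-2\mathrm{Re}[(u\bar v)(\eta\bar\xi)]}{(1+|u|^2+|v|^2)^2}$ (and the same formula in the other two charts $[u,1,v]\mapsto(u,v)$, $[u,v,1]\mapsto(u,v)$). *)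

(* Defs.v *)
From Stdlib Require Import Reals Lra.
From Coquelicot Require Import Coquelicot.
Open Scope R_scope.

(* Quaternions a + b i + c j + d k as ((a,b),(c,d)); octonions as pairs of
   quaternions (Cayley–Dickson, conventions of the paper); the chart
   U_1/~ = O^2 as pairs of octonions.  Using nested products of R gives the
   canonical Coquelicot NormedModule structures (i.e. R^16). *)
Definition quat := ((R * R) * (R * R))%type.
Definition oct := (quat * quat)%type.
Definition pt := (oct * oct)%type.

Definition mkq (a b c d : R) : quat := ((a, b), (c, d)).
Definition q0 (q : quat) : R := fst (fst q).
Definition q1 (q : quat) : R := snd (fst q).
Definition q2 (q : quat) : R := fst (snd q).
Definition q3 (q : quat) : R := snd (snd q).

Definition qadd (p q : quat) : quat :=
  mkq (q0 p + q0 q) (q1 p + q1 q) (q2 p + q2 q) (q3 p + q3 q).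
Definition qopp (p : quat) : quat := mkq (- q0 p) (- q1 p) (- q2 p) (- q3 p).
Definition qscal (r : R) (p : quat) : quat :=
  mkq (r * q0 p) (r * q1 p) (r * q2 p) (r * q3 p).
Definition qconj (p : quat) : quat := mkq (q0 p) (- q1 p) (- q2 p) (- q3 p).
Definition qmul (p q : quat) : quat :=
  mkq (q0 p * q0 q - q1 p * q1 q - q2 p * q2 q - q3 p * q3 q)
      (q0 p * q1 q + q1 p * q0 q + q2 p * q3 q - q3 p * q2 q)
      (q0 p * q2 q - q1 p * q3 q + q2 p * q0 q + q3 p * q1 q)
      (q0 p * q3 q + q1 p * q2 q - q2 p * q1 q + q3 p * q0 q).

Definition oadd (a b : oct) : oct := (qadd (fst a) (fst b), qadd (snd a) (snd b)).
Definition oopp (a : oct) : oct := (qopp (fst a), qopp (snd a)).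
Definition osub (a b : oct) : oct := oadd a (oopp b).
Definition oscal (r : R) (a : oct) : oct := (qscal r (fst a), qscal r (snd a)).
Definition oconj (a : oct) : oct := (qconj (fst a), qopp (snd a)).
Definition omul (a b : oct) : oct :=
  let (x1, x2) := a in let (y1, y2) := b in
  (qadd (qmul x1 y1) (qopp (qmul (qconj y2) x2)),
   qadd (qmul y2 x1) (qmul x2 (qconj y1))).
Definition oRe (a : oct) : R := q0 (fst a).
Definition oinner (a b : oct) : R := oRe (omul a (oconj b)).
Definition onorm2 (a : oct) : R := oinner a a.

(* The quadratic form of the metric g at the point (u,v) of the chart
   U_1/~ = O^2, evaluated on the tangent vector (xi,eta). *)
Definition ds2 (p X : pt) : R :=
  let (u, v) := p in let (xi, eta) := X in
  (onorm2 xi * (1 + onorm2 v) + onorm2 eta * (1 + onorm2 u)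
   - 2 * oRe (omul (omul u (oconj v)) (omul eta (oconj xi))))
  / (1 + onorm2 u + onorm2 v) ^ 2.

Definition Rmap (r : R) (l : oct) (p : pt) : pt :=
  let (u, v) := p in
  (oadd (oscal r u) (omul l v), osub (omul (oconj l) u) (oscal r v)).

Definition is_isometry (F : pt -> pt) : Prop :=
  (exists G : pt -> pt, (forall p, G (F p) = p) /\ (forall p, F (G p) = p)) /\
  (forall p : pt, exists L : pt -> pt,
      filterdiff F (locally p) L /\
      (forall X : pt, ds2 (F p) (L X) = ds2 p X)).

(* Main.v *)
Require Import Defs.
From Stdlib Require Import Reals Lra.
From Coquelicot Require Import Coquelicot.
Open Scope R_scope.

Ltac dest_o x := let a0 := fresh "a" in let a1 := fresh "a" in let a2 := fresh "a" in let a3 := fresh "a" in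
  let a4 := fresh "a" in let a5 := fresh "a" in let a6 := fresh "a" in let a7 := fresh "a" in
  destruct x as [[[a0 a1] [a2 a3]] [[a4 a5] [a6 a7]]].
Ltac unf := lazy beta iota zeta delta [omul oadd oopp osub oscal oconj oRe oinner onorm2 qadd qopp qscal qconj qmul mkq q0 q1 q2 q3 fst snd].
Ltac pr := repeat match goal with |- (_,_) = (_,_) => f_equal end; ring.

Lemma L1 (r : R) (x y l : oct) :
  omul (oadd (oscal r x) (omul l y)) (oconj (osub (omul (oconj l) x) (oscal r y))) =
  osub (oscal (r*(onorm2 x - onorm2 y) + 2*oinner (omul x (oconj y)) l) l)
       (oscal (r^2+onorm2 l) (omul x (oconj y))).
Proof. dest_o x; dest_o y; dest_o l; unf; pr. Qed.

Lemma L1' (r : R) (x y l : oct) :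
  omul (osub (omul (oconj l) x) (oscal r y)) (oconj (oadd (oscal r x) (omul l y))) =
  osub (oscal (r*(onorm2 x - onorm2 y) + 2*oinner (omul x (oconj y)) l) (oconj l))
       (oscal (r^2+onorm2 l) (omul y (oconj x))).
Proof. dest_o x; dest_o y; dest_o l; unf; pr. Qed.

Lemma Lre (s t k : R) (l A B : oct) :
  oRe (omul (osub (oscal s l) (oscal k A)) (osub (oscal t (oconj l)) (oscal k B))) =
  s*t*onorm2 l - s*k*oRe (omul l B) - t*k*oinner A l + k^2 * oRe (omul A B).
Proof. dest_o A; dest_o B; dest_o l; unf; ring. Qed.

Lemma Lsw (l x y : oct) : oRe (omul l (omul y (oconj x))) = oinner (omul x (oconj y)) l.
Proof. dest_o x; dest_o y; dest_o l; unf; ring. Qed.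

Lemma N1 (r : R) (x y l : oct) :
  onorm2 (oadd (oscal r x) (omul l y)) = r^2*onorm2 x + onorm2 l * onorm2 y + 2*r*oinner (omul x (oconj y)) l.
Proof. dest_o x; dest_o y; dest_o l; unf; ring. Qed.

Lemma N2 (r : R) (x y l : oct) :
  onorm2 (osub (omul (oconj l) x) (oscal r y)) = onorm2 l * onorm2 x + r^2*onorm2 y - 2*r*oinner (omul x (oconj y)) l.
Proof. dest_o x; dest_o y; dest_o l; unf; ring. Qed.

Definition myfst {A B : Type} (p : A * B) : A := fst p.
Definition mysnd {A B : Type} (p : A * B) : B := snd p.
Lemma lin_plus {U : NormedModule R_AbsRing} (f g : U -> R) :
  is_linear f -> is_linear g -> is_linear (fun x => f x + g x).
Proof. intros Hf Hg. apply (is_linear_comp (fun x => (f x, g x)) (fun p : R * R => plus (fst p) (snd p))).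
  now apply is_linear_prod. exact (@is_linear_plus R_AbsRing R_NormedModule). Qed.
Lemma lin_opp {U : NormedModule R_AbsRing} (f : U -> R) :
  is_linear f -> is_linear (fun x => - f x).
Proof. intros Hf. apply (is_linear_comp f opp). exact Hf. exact (@is_linear_opp R_AbsRing R_NormedModule). Qed.
Lemma lin_minus {U : NormedModule R_AbsRing} (f g : U -> R) :
  is_linear f -> is_linear g -> is_linear (fun x => f x - g x).
Proof. intros. unfold Rminus. apply lin_plus; auto. now apply lin_opp. Qed.
Lemma lin_scl {U : NormedModule R_AbsRing} (c : R) (f : U -> R) :
  is_linear f -> is_linear (fun x => c * f x).
Proof. intros Hf. apply (is_linear_comp f (fun y : R => scal c y)). exact Hf.
  apply (@is_linear_scal_r R_AbsRing R_NormedModule). intros; apply Rmult_comm. Qed.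
Lemma lin_scr {U : NormedModule R_AbsRing} (c : R) (f : U -> R) :
  is_linear f -> is_linear (fun x => f x * c).
Proof. intros Hf. apply (is_linear_ext (fun x => c * f x)). intros; apply Rmult_comm. now apply lin_scl. Qed.
Lemma lin_fst {U V W : NormedModule R_AbsRing} (f : U -> V * W) :
  is_linear f -> is_linear (fun x => myfst (f x)).
Proof. intros Hf. apply (is_linear_comp f fst). exact Hf. apply is_linear_fst. Qed.
Lemma lin_snd {U V W : NormedModule R_AbsRing} (f : U -> V * W) :
  is_linear f -> is_linear (fun x => mysnd (f x)).
Proof. intros Hf. apply (is_linear_comp f snd). exact Hf. apply is_linear_snd. Qed.
Lemma lin_pair {U V W : NormedModule R_AbsRing} (f : U -> V) (g : U -> W) :
  is_linear f -> is_linear g -> is_linear (fun x => (f x, g x)).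
Proof. intros; now apply is_linear_prod. Qed.

Ltac linsolve1 :=
  match goal with
  | |- is_linear (fun x => (@?A x, @?B x)) => apply (lin_pair A B)
  | |- is_linear (fun x => @?A x + @?B x) => apply (lin_plus A B)
  | |- is_linear (fun x => @?A x - @?B x) => apply (lin_minus A B)
  | |- is_linear (fun x => - @?A x) => apply (lin_opp A)
  | |- is_linear (fun x => ?c * @?A x) => apply (lin_scl c A)
  | |- is_linear (fun x => @?A x * ?c) => apply (lin_scr c A)
  | |- is_linear (fun x => myfst (@?A x)) => apply (lin_fst A)
  | |- is_linear (fun x => mysnd (@?A x)) => apply (lin_snd A)
  | |- is_linear (fun x => x) => apply is_linear_id
  end.

Definition etaq (q : quat) : quat := ((myfst (myfst q), mysnd (myfst q)), (myfst (mysnd q), mysnd (mysnd q))).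
Definition etao (o : oct) : oct := (etaq (myfst o), etaq (mysnd o)).
Definition etap (p : pt) : pt := (etao (myfst p), etao (mysnd p)).

Lemma Rmap_lin (r : R) (l : oct) : is_linear (Rmap r l).
Proof.
  apply (is_linear_ext (fun x => Rmap r l (etap x))).
  { intros [[[[a b][c d]][[e f][g h]]] [[[a' b'][c' d']][[e' f'][g' h']]]]. reflexivity. }
  destruct l as [[[a b][c d]][[e f][g h]]].
  lazy beta iota zeta delta [Rmap etap etao etaq omul oadd oopp osub oscal oconj qadd qopp qscal qconj qmul mkq q0 q1 q2 q3 fst snd].
  repeat linsolve1.
Qed.

Lemma oscal1 (x : oct) : oscal 1 x = x.
Proof. dest_o x; unf; pr. Qed.

Lemma Rinv2 (r : R) (l : oct) (p : pt) :
  Rmap r l (Rmap r l p) = (oscal (r^2 + onorm2 l) (fst p), oscal (r^2 + onorm2 l) (snd p)).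
Proof. destruct p as [x y]. dest_o x; dest_o y; dest_o l.
  lazy beta iota zeta delta [Rmap omul oadd oopp osub oscal oconj oRe oinner onorm2 qadd qopp qscal qconj qmul mkq q0 q1 q2 q3 fst snd]; pr. Qed.

Theorem proposition4p1 (r : R) (l : oct) :
  r ^ 2 + onorm2 l = 1 -> is_isometry (Rmap r l).
Proof.
  intros H. split.
  - exists (Rmap r l). split; intros p; rewrite Rinv2, H, !oscal1; destruct p; reflexivity.
  - intros p. exists (Rmap r l). split.
    + apply filterdiff_linear. apply Rmap_lin.
    + intros X. destruct p as [u v]. destruct X as [xi eta].
      lazy beta iota delta [ds2 Rmap].
      rewrite L1, L1', Lre, Lsw, !N1, !N2, H.
      replace (onorm2 l) with (1 - r^2) by lra.
      replace (1 + (r ^ 2 * onorm2 u + (1 - r ^ 2) * onorm2 v + 2 * r * oinner (omul u (oconj v)) l) +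
        ((1 - r ^ 2) * onorm2 u + r ^ 2 * onorm2 v - 2 * r * oinner (omul u (oconj v)) l))
        with (1 + onorm2 u + onorm2 v) by ring.
      unfold Rdiv. f_equal. ring.
Qed.
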